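(* Let $n\ge2$ and let $T$ be a symmetric linear isomorphism of $\mathbb R^n$ which is not positive-definite. Then the equation $X^\circ=T(X)$ has infinitely many solutions $X\in\mathcal K_{(0),b}^n$. In particular $X^\circ=-X$ has infinitely many solutions in $\mathcal K_{(0),b}^n$.
   Context: $\mathcal K_{(0),b}^n$: compact convex subsets of $\mathbb R^n$ containing $0$ in their interior. Polar: $X^\circ=\{x:\sup_{a\in X}\langle a,x\rangle\le1\}$. *)

(* Defs.v *)
From HB Require Import structures.
From mathcomp Require Import all_boot all_order all_algebra.
From mathcomp Require Import all_classical all_reals all_analysis.
Set Implicit Arguments. Unset Strict Implicit. Unset Printing Implicit Defensive.
Import Order.TTheory GRing.Theory Num.Theory.
Import numFieldNormedType.Exports.
Local Open Scope classical_set_scope.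
Local Open Scope ring_scope.

Definition inner (R : realType) (n : nat) (u v : 'rV[R]_n) : R :=
  \sum_(i < n) u 0 i * v 0 i.

Definition polar (R : realType) (n : nat) (X : set 'rV[R]_n) : set 'rV[R]_n :=
  [set x | forall a, X a -> inner a x <= 1].

Definition convex_set (R : realType) (n : nat) (X : set 'rV[R]_n) : Prop :=
  forall x y, X x -> X y -> forall t : R, 0 <= t -> t <= 1 ->
    X (t *: x + (1 - t) *: y).

Definition K0b (R : realType) (n : nat) (X : set 'rV[R]_n) : Prop :=
  compact X /\ convex_set X /\ (interior X) 0.

Definition lin_img (R : realType) (n : nat) (T : 'M[R]_n) (X : set 'rV[R]_n)
  : set 'rV[R]_n := (fun x => x *m T) @` X.

Definition posdef (R : realType) (n : nat) (T : 'M[R]_n) : Prop :=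
  forall x : 'rV[R]_n, x != 0 -> 0 < inner x (x *m T).

(* Main.v *)
Require Import Defs.
From HB Require Import structures.
From mathcomp Require Import all_boot all_order all_algebra.
From mathcomp Require Import all_classical all_reals all_analysis.
From mathcomp Require Import ring lra zify.
Import Order.TTheory GRing.Theory Num.Theory.
Import numFieldNormedType.Exports.
Local Open Scope classical_set_scope.
Local Open Scope ring_scope.
Set Implicit Arguments. Unset Strict Implicit.


Section OneD.
Variable R : realType.
Variables (d a b : R).
Hypotheses (a0 : 0 < a) (b0 : 0 < b) (ab : a * b = `|d|) (d0 : d != 0)
  (dpos : 0 < d -> a = b).

Definition phi1 (s : R) := ((a + b) * `|s| + (a - b) * s) / 2.
Definition kap1 (r : R) :=
  if 0 < d then r else if 0 <= r then - (a / b) * r else (b / a) * (- r).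

Lemma phi1_pos s : 0 <= s -> phi1 s = a * s.
Proof. by move=> s0; rewrite /phi1 ger0_norm //; field. Qed.
Lemma phi1_neg s : s < 0 -> phi1 s = b * (- s).
Proof. by move=> s0; rewrite /phi1 ltr0_norm //; field. Qed.

Lemma phi1_ge0 s : 0 <= phi1 s.
Proof.
case: (leP 0 s) => hs; [rewrite phi1_pos //|rewrite phi1_neg //].
  by rewrite mulr_ge0 // ltW.
by apply: mulr_ge0; [exact: ltW | rewrite oppr_ge0 ltW].
Qed.

Lemma phi1_hom l s : 0 <= l -> phi1 (l * s) = l * phi1 s.
Proof. by move=> l0; rewrite /phi1 normrM (ger0_norm l0); field. Qed.

Lemma phi1_bound s : `|s| <= phi1 s * (a^-1 + b^-1).
Proof.
have ai : 0 < a^-1 by rewrite invr_gt0.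
have bi : 0 < b^-1 by rewrite invr_gt0.
have aa : a * a^-1 = 1 by rewrite mulfV // gt_eqF.
have bb : b * b^-1 = 1 by rewrite mulfV // gt_eqF.
case: (leP 0 s) => hs.
  rewrite phi1_pos // ger0_norm // mulrDr -mulrA (mulrC s) mulrA aa mul1r.
  by rewrite lerDl; apply: mulr_ge0 => //; [apply: mulr_ge0 => //; exact: ltW | exact: ltW].
rewrite phi1_neg // ltr0_norm // mulrDr.
rewrite -[b * -s * b^-1]mulrA (mulrC (-s)) mulrA bb mul1r.
rewrite lerDr; apply: mulr_ge0; last exact: ltW.
by apply: mulr_ge0; [exact: ltW| rewrite oppr_ge0 ltW].
Qed.

Lemma key1 s r : d * s * r <= phi1 s * phi1 r.
Proof.
have ab0 : 0 < a * b by rewrite mulr_gt0.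
case: (ltP 0 d) => hd.
  have ea := dpos hd; move: ab; rewrite gtr0_norm // -ea => ab'.
  have pE x : phi1 x = `|a * x|.
    by rewrite /phi1 -ea normrM gtr0_norm //; field.
  rewrite !pE -normrM.
  suff -> : d * s * r = a * s * (a * r) by exact: ler_norm.
  by rewrite -ab'; ring.
have hd' : d < 0 by rewrite lt_neqAle d0 hd.
move: ab; rewrite ltr0_norm // => ab'.
have dE : d = - (a * b) by rewrite ab' opprK.
rewrite dE.
case: (leP 0 s) => hs; [rewrite phi1_pos //|rewrite phi1_neg //];
(case: (leP 0 r) => hr; [rewrite phi1_pos //|rewrite phi1_neg //]).
- have h1 : 0 <= s * r by rewrite mulr_ge0.
  have h2 : 0 <= a * b * (s * r) by rewrite mulr_ge0 // ltW.
  have h3 : 0 <= a * s * (a * r) by rewrite mulrACA mulr_ge0 // mulr_ge0 // ltW.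
  nra.
- nra.
- nra.
- have h1 : 0 <= s * r by nra.
  have h2 : 0 <= a * b * (s * r) by rewrite mulr_ge0 // ltW.
  have h3 : 0 <= b * - s * (b * - r).
    by rewrite mulrACA; apply: mulr_ge0; [rewrite mulr_ge0 ?ltW | rewrite mulrNN; nra].
  nra.
Qed.

Lemma kap1_phi r : phi1 (kap1 r) = phi1 r.
Proof.
rewrite /kap1; case: ifP => // hd.
have ab1 : a / b * b = a by rewrite -mulrA mulVf ?mulr1 // gt_eqF.
have ba1 : b / a * a = b by rewrite -mulrA mulVf ?mulr1 // gt_eqF.
have q1 : 0 < a / b by rewrite divr_gt0.
have q2 : 0 < b / a by rewrite divr_gt0.
case: (leP 0 r) => hr.
  case: (eqVneq r 0) => [->|rn0]; first by rewrite mulr0.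
  have hr' : 0 < r by rewrite lt_neqAle eq_sym rn0.
  rewrite phi1_neg ?phi1_pos //; last by nra.
  rewrite mulNr opprK mulrA (mulrC b) ab1 //.
rewrite phi1_pos ?phi1_neg //; last by nra.
by rewrite mulrA (mulrC a) ba1.
Qed.

Lemma kap1_prod r : d * kap1 r * r = phi1 r ^+ 2.
Proof.
rewrite /kap1; case: ifP => hd.
  have ea := dpos hd; move: ab; rewrite gtr0_norm // -ea => ab'.
  case: (leP 0 r) => hr; [rewrite phi1_pos //|rewrite phi1_neg //]; rewrite -ab' -?ea; ring.
have hd' : d < 0 by rewrite lt_neqAle d0 /= leNgt hd.
have dE : d = - (a * b) by rewrite ab ltr0_norm // opprK.
have an : a != 0 by rewrite gt_eqF.
have bn : b != 0 by rewrite gt_eqF.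
case: (leP 0 r) => hr; [rewrite phi1_pos //|rewrite phi1_neg //]; rewrite dE; field => //.
Qed.

Lemma kap1_hom l r : 0 < l -> kap1 (l * r) = l * kap1 r.
Proof.
move=> l0; rewrite /kap1; case: ifP => // _.
case: (leP 0 r) => hr.
  have h : 0 <= l * r by rewrite mulr_ge0 // ltW.
  rewrite h; ring.
rewrite ifF; first ring.
by apply/negbTE; rewrite -ltNge pmulr_rlt0.
Qed.

Lemma phi1_cont : continuous phi1.
Proof.
move=> x; rewrite /phi1.
apply: cvgM; last exact: cvg_cst.
apply: cvgD; apply: cvgM; try exact: cvg_cst.
  exact: norm_continuous.
exact: cvg_id.
Qed.

End OneD.


Section Multi.
Variables (R : realType) (n : nat) (d al be : 'I_n -> R).
Hypotheses (al0 : forall i, 0 < al i) (be0 : forall i, 0 < be i)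
  (albe : forall i, al i * be i = `|d i|) (d0 : forall i, d i != 0)
  (dpos : forall i, 0 < d i -> al i = be i).

Definition phiN i := phi1 (al i) (be i).
Definition kapN i := kap1 (d i) (al i) (be i).
Definition GN (z : 'rV[R]_n) := \sum_i (phiN i (z 0 i)) ^+ 2.
Definition bilN (w z : 'rV[R]_n) := \sum_i d i * w 0 i * z 0 i.

Lemma GN_ge0 z : 0 <= GN z.
Proof. by apply: sumr_ge0 => i _; rewrite sqr_ge0. Qed.

Lemma selfdual_l w z : GN w <= 1 -> GN z <= 1 -> bilN w z <= 1.
Proof.
move=> hw hz.
suff : 2 * bilN w z <= GN w + GN z by lra.
rewrite /bilN /GN mulr_sumr -big_split /=; apply: ler_sum => i _.
have := key1 (al0 i) (be0 i) (albe i) (d0 i) (@dpos i) (w 0 i) (z 0 i).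
rewrite -/(phiN i).
have := sqr_ge0 (phiN i (w 0 i) - phiN i (z 0 i)); nra.
Qed.

Lemma selfdual_r z : (forall w, GN w <= 1 -> bilN w z <= 1) -> GN z <= 1.
Proof.
move=> H; rewrite leNgt; apply/negP => hg.
set g := GN z in hg.
set mu := (g + 1)^-1.
have mu1 : mu * (g + 1) = 1 by rewrite mulVf // gt_eqF // ltr_wpDl // GN_ge0.
have mu0 : 0 < mu by rewrite invr_gt0 ltr_wpDl // GN_ge0.
set lam := 2 * mu.
have lam0 : 0 < lam by rewrite mulr_gt0.
pose w := \row_i (lam * kapN i (z 0 i)).
have Gw : GN w = lam ^+ 2 * g.
  rewrite /GN /g /GN mulr_sumr; apply: eq_bigr => i _; rewrite mxE.
  by rewrite /phiN phi1_hom ?ltW // /kapN (kap1_phi (d i) (al0 i) (be0 i)) exprMn.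
have Bw : bilN w z = lam * g.
  rewrite /bilN /g /GN mulr_sumr; apply: eq_bigr => i _; rewrite mxE.
  have := kap1_prod (al0 i) (be0 i) (albe i) (d0 i) (@dpos i) (z 0 i).
  rewrite -/(phiN i) -/(kapN i) => <-.
  have E (x y u v : R) : x * (v * y) * u = v * (x * y * u) by ring.
  exact: E.
have := H w; rewrite Gw Bw /lam.
have h1 : (2 * mu) ^+ 2 * g <= 1.
  have : 0 <= (g - 1) ^+ 2 by rewrite sqr_ge0.
  nra.
have h2 : 1 < 2 * mu * g by nra.
move=> /(_ h1); lra.
Qed.

End Multi.


Section Diag.
Variables (R : realType) (n : nat) (T : 'M[R]_n).
Hypotheses (symT : T^T = T) (uT : T \in unitmx).

Definition bf (u v : 'rV[R]_n) := (u *m T *m v^T) 0 0.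

Lemma bf_sym u v : bf u v = bf v u.
Proof.
rewrite /bf -[in LHS](trmxK (u *m T *m v^T)) mxE.
by rewrite !trmx_mul trmxK symT mulmxA.
Qed.

Lemma bfDl u u' v : bf (u + u') v = bf u v + bf u' v.
Proof. by rewrite /bf !mulmxDl mxE. Qed.

Lemma bfDr u v v' : bf u (v + v') = bf u v + bf u v'.
Proof. by rewrite /bf linearD /= mulmxDr mxE. Qed.

Lemma bf_delta u j : bf u (delta_mx 0 j) = (u *m T) 0 j.
Proof.
rewrite /bf mxE (bigD1 j) //= big1 => [|k kj]; rewrite !mxE ?eqxx ?mulr1 ?addr0 //.
by rewrite (negbTE kj) andbF mulr0.
Qed.

Lemma step m (P : 'M[R]_(m, n)) : (m < n)%N ->
  (forall i j, i != j -> (P *m T *m P^T) i j = 0) ->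
  (forall i, (P *m T *m P^T) i i != 0) ->
  exists v : 'rV[R]_n, v *m T *m P^T = 0 /\ bf v v != 0.
Proof.
move=> hm hdiag hnz.
set A := T *m P^T.
have hA v : v *m T *m P^T = v *m A by rewrite mulmxA.
set K := kermx A.
have rK : (0 < \rank K)%N.
  rewrite /K mxrank_ker; have := rank_leq_col A; lia.
have [i0 Hi0] : exists i, row i K != 0.
  apply: contrapT => H; move: rK; rewrite lt0n mxrank_eq0 => /eqP; apply.
  apply/row_matrixP => i; rewrite row0; apply: contrapT => Hi; apply: H; exists i.
  exact/eqP.
set v0 := row i0 K.
have v0A : v0 *m A = 0 by apply/eqP; rewrite -sub_kermx row_sub.
apply: contrapT => Hno.
have Hz v : v *m A = 0 -> bf v v = 0.
  move=> vA; apply: contrapT => bv; apply: Hno; exists v; split; last exact/eqP.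
  by rewrite hA.
set D := P *m A.
have DE : D = P *m T *m P^T by rewrite /D mulmxA.
have Hb x : bf v0 x = 0.
  pose c := \row_i ((x *m A) 0 i / D i i).
  set w := x - c *m P.
  have key (y : 'rV_m) : y - (\row_i (y 0 i / D i i)) *m D = 0.
    apply/rowP => j; rewrite !mxE.
    rewrite (bigD1 j) //= big1 => [|k kj]; last first.
      by rewrite DE hdiag ?mulr0 // eq_sym.
    rewrite !mxE addr0 -mulrA mulVf ?mulr1 ?subrr //.
    by move: (hnz j); rewrite -DE /D mxE.
  have wA : w *m A = 0.
    by rewrite /w mulmxBl -mulmxA -/D key.
  have xE : x = w + c *m P by rewrite /w subrK.
  clearbody w.
  have b1 : bf v0 (c *m P) = 0.
    by rewrite /bf trmx_mul mulmxA hA v0A mul0mx mxE.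
  have b2 : bf v0 w = 0.
    have h := Hz (v0 + w); rewrite mulmxDl v0A wA addr0 in h.
    move: (h erefl); rewrite bfDl !bfDr (Hz _ v0A) (Hz _ wA) (bf_sym w v0).
    move=> h2; have : 2 * bf v0 w = 0 by lra.
    by move/eqP; rewrite mulf_eq0 pnatr_eq0 /= => /eqP.
  by rewrite xE bfDr b1 b2 addr0.
have v0T : v0 *m T = 0.
  by apply/rowP => j; rewrite -bf_delta Hb mxE.
have : v0 = 0 by rewrite -[v0]mulmx1 -(mulmxV uT) mulmxA v0T mul0mx.
by move/eqP; rewrite (negbTE Hi0).
Qed.

Lemma eq_neq0 (x y : R) : x = y -> y != 0 -> x != 0.
Proof. by move=> ->. Qed.

Lemma diag_ex m : (m <= n)%N -> exists P : 'M[R]_(m, n),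
  (forall i j, i != j -> (P *m T *m P^T) i j = 0) /\
  (forall i, (P *m T *m P^T) i i != 0).
Proof.
elim: m => [|m IH] hm.
  by exists 0; split => [[]|[]].
have [P [hd hz]] := IH (ltnW hm).
have [v [hv bv]] := step hm hd hz.
exists (col_mx v P : 'M[R]_(m.+1, n)).
have E : col_mx v P *m T *m (col_mx v P)^T =
   block_mx (v *m T *m v^T) (v *m T *m P^T) (P *m T *m v^T) (P *m T *m P^T).
  by rewrite tr_col_mx mul_col_mx mul_col_row.
have hv' : P *m T *m v^T = 0.
  have -> : P *m T *m v^T = (v *m T *m P^T)^T.
    by rewrite !trmx_mul trmxK symT mulmxA.
  by rewrite hv trmx0.
rewrite E; split.
  move=> i j; rewrite -(splitK (i : 'I_(1 + m))) -(splitK (j : 'I_(1 + m))).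
  case: (fintype.split (i : 'I_(1 + m))) => i'; case: (fintype.split (j : 'I_(1 + m))) => j' /= hij.
  - by move: hij; rewrite !ord1 eqxx.
  - by apply: (etrans (block_mxEur _ _ _ _ i' j')); rewrite hv mxE.
  - by apply: (etrans (block_mxEdl _ _ _ _ i' j')); rewrite hv' mxE.
  - apply: (etrans (block_mxEdr _ _ _ _ i' j')); rewrite hd //.
move=> i; rewrite -(splitK (i : 'I_(1 + m))); case: (fintype.split (i : 'I_(1 + m))) => i' /=.
  apply: (eq_neq0 (block_mxEul _ _ _ _ i' i')); by rewrite ord1.
apply: (eq_neq0 (block_mxEdr _ _ _ _ i' i')); exact: hz.
Qed.

End Diag.


Lemma cont_sum (R : realType) (T' : topologicalType) (I : Type) (s : seq I)
  (f : I -> T' -> R) : (forall i, continuous (f i)) ->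
  continuous (fun x => \sum_(i <- s) f i x).
Proof.
move=> hf; elim: s => [|i s IH].
  under eq_fun do rewrite big_nil; exact: cst_continuous.
under eq_fun do rewrite big_cons.
by move=> x; apply: cvgD; [exact: hf | exact: IH].
Qed.

Lemma sq_cont (R : realType) : continuous (fun r : R => r * r).
Proof. by move=> r; apply: cvgM; exact: cvg_id. Qed.

Section Main.
Variables (R : realType) (n : nat) (T P : 'M[R]_n).
Hypotheses (symT : T^T = T) (uT : T \in unitmx) (uP : P \in unitmx).
Hypotheses (hd : forall i j, i != j -> (P *m T *m P^T) i j = 0)
  (hz : forall i, (P *m T *m P^T) i i != 0).
Variable k : 'I_n.
Hypothesis dk : (P *m T *m P^T) k k < 0.

Definition Q := invmx P.
Definition dd i := (P *m T *m P^T) i i.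
Definition al (t : R) i := if i == k then t else Num.sqrt `|dd i|.
Definition be (t : R) i := if i == k then `|dd k| / t else Num.sqrt `|dd i|.
Definition XX (t : R) := [set x : 'rV[R]_n | GN (al t) (be t) (x *m Q) <= 1].

Lemma QP : Q *m P = 1. Proof. exact: mulVmx. Qed.
Lemma PQ : P *m Q = 1. Proof. exact: mulmxV. Qed.

Lemma DgE : P *m T *m P^T = diag_mx (\row_i dd i).
Proof.
apply/matrixP => i j; rewrite [in RHS]mxE [in RHS]mxE; case: eqVneq => [->|ij].
  by rewrite mulr1n.
by rewrite hd // mulr0n.
Qed.

Lemma bilE (w z : 'rV[R]_n) :
  (w *m (P *m T *m P^T) *m z^T) 0 0 = bilN dd w z.
Proof.
rewrite DgE mul_mx_diag mxE /bilN; apply: eq_bigr => i _; rewrite !mxE.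
by rewrite (mulrC (w 0 i)) .
Qed.

Lemma innerE (a x : 'rV[R]_n) :
  inner a (x *m T) = bilN dd (a *m Q) (x *m Q).
Proof.
rewrite -bilE /inner.
have -> : a *m Q *m (P *m T *m P^T) *m (x *m Q)^T = a *m (x *m T)^T.
  rewrite !trmx_mul symT !mulmxA -[a *m Q *m P]mulmxA QP mulmx1.
  by rewrite -[a *m T *m P^T *m Q^T]mulmxA -trmx_mul QP trmx1 mulmx1.
by rewrite mxE; apply: eq_bigr => i _; rewrite [in RHS]mxE.
Qed.

Lemma dd_neq0 i : dd i != 0. Proof. exact: hz. Qed.

Section Param.
Variable t : R.
Hypothesis t0 : 0 < t.

Lemma al0 i : 0 < al t i.
Proof. by rewrite /al; case: ifP => // _; rewrite sqrtr_gt0 normr_gt0 dd_neq0. Qed.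
Lemma be0 i : 0 < be t i.
Proof.
rewrite /be; case: ifP => _; last by rewrite sqrtr_gt0 normr_gt0 dd_neq0.
by rewrite divr_gt0 // normr_gt0 dd_neq0.
Qed.
Lemma albe i : al t i * be t i = `|dd i|.
Proof.
rewrite /al /be; case: ifP => [/eqP ->|_].
  by rewrite mulrC -mulrA mulVf ?mulr1 // gt_eqF.
by rewrite -expr2 sqr_sqrtr.
Qed.
Lemma dpos i : 0 < dd i -> al t i = be t i.
Proof.
rewrite /al /be; case: ifP => // /eqP -> h.
by move: dk; rewrite -/(dd k) ltNge ltW.
Qed.

Notation G := (GN (al t) (be t)).

Lemma XX_sd x : XX t x <-> forall w, G w <= 1 -> bilN dd w (x *m Q) <= 1.
Proof.
split.
  move=> hx w hw; exact: (selfdual_l (al0) (be0) (albe) (dd_neq0) (dpos) hw hx).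
move=> h; exact: (selfdual_r (al0) (be0) (albe) (dd_neq0) (dpos) h).
Qed.

Lemma XX_polar : polar (XX t) = lin_img T (XX t).
Proof.
apply/seteqP; split => y.
  move=> hy; exists (y *m invmx T); last by rewrite -mulmxA mulVmx // mulmx1.
  apply/XX_sd => w hw.
  have hwP : XX t (w *m P) by rewrite /XX /= -mulmxA PQ mulmx1.
  have := hy _ hwP; rewrite -{1}[y](mulmxKV uT) innerE.
  by rewrite -mulmxA PQ mulmx1.
case=> x hx <- a ha; rewrite innerE.
by move/XX_sd: hx; apply.
Qed.

Lemma coordQ_cont i : continuous (fun x : 'rV[R]_n => (x *m Q) 0 i).
Proof.
have -> : (fun x : 'rV[R]_n => (x *m Q) 0 i) =
          (fun x => \sum_j x 0 j * Q j i).
  by apply: funext => x; rewrite mxE.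
apply: cont_sum => j x.
apply: continuousM; [exact: (@coord_continuous R 1 n 0 j x) | exact: cst_continuous].
Qed.

Lemma GQ_cont : continuous (fun x : 'rV[R]_n => G (x *m Q)).
Proof.
rewrite /GN; apply: cont_sum => i.
under eq_fun do rewrite expr2.
move=> x.
have h1 := continuous_comp (@coordQ_cont i x) (@phi1_cont R (al t i) (be t i) _).
have h2 := continuous_comp h1 (@sq_cont R _).
exact: h2.
Qed.

Lemma single_le (F : 'I_n -> R) j : (forall i, 0 <= F i) -> F j <= \sum_i F i.
Proof. by move=> h; rewrite (bigD1 j) //= lerDl sumr_ge0. Qed.

Lemma XX_coord x i : XX t x -> `|(x *m Q) 0 i| <= (al t i)^-1 + (be t i)^-1.
Proof.
move=> hx.
have h1 : phiN (al t) (be t) i ((x *m Q) 0 i) ^+ 2 <= 1.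
  apply: le_trans hx; apply: (@single_le (fun i => phiN (al t) (be t) i ((x *m Q) 0 i) ^+ 2) i).
  by move=> j; rewrite sqr_ge0.
have h0 := phi1_ge0 (al0 i) (be0 i) ((x *m Q) 0 i).
have hb := phi1_bound (al0 i) (be0 i) ((x *m Q) 0 i).
have hc : 0 <= (al t i)^-1 + (be t i)^-1.
  by rewrite addr_ge0 // ltW // invr_gt0 ?al0 ?be0.
rewrite /phiN in h1.
apply: le_trans hb _; rewrite ler_piMl //; nra.
Qed.

Lemma XX_bounded : bounded_set (XX t).
Proof.
pose c i := (al t i)^-1 + (be t i)^-1.
have c0 i : 0 <= c i by rewrite addr_ge0 // ltW // invr_gt0 ?al0 ?be0.
pose B := \sum_i \sum_j c i * `|P i j|.
have B0 : 0 <= B by apply: sumr_ge0 => i _; apply: sumr_ge0 => j _; rewrite mulr_ge0.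
exists B; split; first exact: num_real.
move=> M hM x hx; apply: le_trans (ltW hM).
rewrite /Num.Def.normr /= mx_normrE; apply/bigmax_leP; split => // -[i0 j] _ /=.
rewrite ord1.
have xE : x = x *m Q *m P by rewrite -mulmxA QP mulmx1.
rewrite xE mxE; apply: le_trans (ler_norm_sum _ _ _) _.
apply: ler_sum => i _; rewrite normrM.
apply: le_trans (@single_le (fun j => c i * `|P i j|) j _); last first.
  by move=> j'; rewrite mulr_ge0.
by rewrite ler_wpM2r // XX_coord.
Qed.

Lemma XX_closed : closed (XX t).
Proof.
have -> : XX t = (fun x => G (x *m Q)) @^-1` [set r | r <= 1] by [].
by apply: preimage_closed; [move=> x _; exact: GQ_cont | exact: closed_le].
Qed.

Lemma G0 : G 0 = 0.
Proof.
rewrite /GN big1 // => i _.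
by rewrite mxE /phiN /phi1 normr0 !mulr0 addr0 mul0r expr2 mulr0.
Qed.

Lemma XX_interior : (interior (XX t)) 0.
Proof.
pose U := (fun x => G (x *m Q)) @^-1` [set r | r < 1].
apply: (@filterS _ _ _ U); first by move=> x /ltW.
apply: open_nbhs_nbhs; split.
  by apply: open_comp; [move=> x _; exact: GQ_cont | exact: open_lt].
by rewrite /U /= mul0mx G0.
Qed.

Lemma bilN_conv w u v (s : R) :
  bilN dd w (s *: u + (1 - s) *: v) = s * bilN dd w u + (1 - s) * bilN dd w v.
Proof.
rewrite /bilN !mulr_sumr -big_split /=; apply: eq_bigr => i _; rewrite !mxE.
ring.
Qed.

Lemma XX_convex : Defs.convex_set (XX t).
Proof.
move=> x y hx hy s s0 s1; apply/XX_sd => w hw.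
rewrite mulmxDl -!scalemxAl bilN_conv.
have := (XX_sd x).1 hx w hw; have := (XX_sd y).1 hy w hw; nra.
Qed.

Lemma XX_K0b : K0b (XX t).
Proof.
split; first by apply: bounded_closed_compact; [exact: XX_bounded | exact: XX_closed].
split; [exact: XX_convex | exact: XX_interior].
Qed.

End Param.

Lemma XX_mem (t s : R) : 0 < t -> 0 < s ->
  XX s ((t^-1 *: delta_mx 0 k) *m P) -> s <= t.
Proof.
have ek : (t^-1 *: delta_mx 0 k : 'rV[R]_n) 0 k = t^-1 by rewrite !mxE !eqxx mulr1.
move=> t0 s0; rewrite /XX /= -mulmxA PQ mulmx1 /GN (bigD1 k) //= big1 => [|i ik].
  rewrite addr0 ek /phiN phi1_pos; last by rewrite ltW // invr_gt0.
  rewrite /al eqxx => h.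
  have : s * t^-1 <= 1.
    have h0 : 0 <= s * t^-1 by rewrite mulr_ge0 ?ltW // invr_gt0.
    nra.
  by rewrite ler_pdivrMr // mul1r.
rewrite !mxE (negbTE ik) andbF mulr0.
by rewrite /phiN /phi1 normr0 !mulr0 addr0 mul0r expr2 mulr0.
Qed.

Lemma XX_mem' (t : R) : 0 < t -> XX t ((t^-1 *: delta_mx 0 k) *m P).
Proof.
have ek : (t^-1 *: delta_mx 0 k : 'rV[R]_n) 0 k = t^-1 by rewrite !mxE !eqxx mulr1.
move=> t0; rewrite /XX /= -mulmxA PQ mulmx1 /GN (bigD1 k) //= big1 => [|i ik].
  rewrite addr0 ek /phiN phi1_pos; last by rewrite ltW // invr_gt0.
  by rewrite /al eqxx mulfV ?gt_eqF // expr1n.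
rewrite !mxE (negbTE ik) andbF mulr0.
by rewrite /phiN /phi1 normr0 !mulr0 addr0 mul0r expr2 mulr0.
Qed.

End Main.


Unset Implicit Arguments.
Set Strict Implicit.

Theorem mainTheorem19 (R : realType) (n : nat) (T : 'M[R]_n) :
  (2 <= n)%N -> T^T = T -> T \in unitmx -> ~ posdef T ->
  ~ finite_set [set X : set 'rV[R]_n | K0b X /\ polar X = lin_img T X].
Proof.
move=> n2 symT uT npd.
have [P [hd hz]] := diag_ex symT uT (leqnn n).
have uP : P \in unitmx.
  have h : \det (P *m T *m P^T) != 0.
    rewrite (DgE hd) det_diag; apply/prodf_neq0 => i _; rewrite mxE; exact: hz.
  rewrite unitmxE unitfE; apply: contra h => /eqP h.
  by rewrite !det_mulmx h !mul0r.
have [k dk] : exists k, (P *m T *m P^T) k k < 0.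
  apply: contrapT => H; apply: npd => x x0.
  have dp i : 0 < (P *m T *m P^T) i i.
    rewrite lt_neqAle eq_sym hz /= leNgt; apply/negP => h; apply: H; exists i.
    exact: h.
  rewrite (innerE symT uP hd x x).
  set z := x *m Q P.
  have [i zi] : exists i, z 0 i != 0.
    apply: contrapT => H2; move: x0; rewrite -[x]mulmx1 -(mulVmx uP) mulmxA -/(Q P) -/z.
    have -> : z = 0.
      apply/rowP => j; rewrite [in RHS]mxE; apply: contrapT => hj; apply: H2; exists j.
    exact/eqP.
    by rewrite mul0mx eqxx.
  rewrite /bilN (bigD1 i) //=.
  have h1 : 0 < dd T P i * z 0 i * z 0 i.
    rewrite -mulrA mulr_gt0 ?dp // -expr2 lt_neqAle sqr_ge0 andbT eq_sym.
    by rewrite sqrf_eq0.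
  have h2 : 0 <= \sum_(j | j != i) dd T P j * z 0 j * z 0 j.
    apply: sumr_ge0 => j _; rewrite -mulrA; apply: mulr_ge0; first exact: ltW (dp j).
    by rewrite -expr2 sqr_ge0.
  by apply: (lt_le_trans h1); rewrite lerDl.
pose f (m : nat) := XX T P k (m.+1%:R).
have f0 m : 0 < (m.+1%:R : R) by rewrite ltr0n.
move=> fS.
have fS' : f @` setT `<=` [set X : set 'rV[R]_n | K0b X /\ polar X = lin_img T X].
  move=> _ [m _ <-]; split; first exact: XX_K0b.
  exact: XX_polar.
have fin := sub_finite_set fS' fS.
have injf : injective f.
  move=> a b hab.
  have h1 := XX_mem' T uP k (f0 a); rewrite -/(f a) hab in h1.
  have h2 := XX_mem' T uP k (f0 b); rewrite -/(f b) -hab in h2.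
  have := XX_mem uP (f0 a) (f0 b) h1; have := XX_mem uP (f0 b) (f0 a) h2.
  rewrite !ler_nat => l1 l2; apply/eqP; rewrite eqn_leq.
  by apply/andP; split; [exact: l1 | exact: l2].
apply: infinite_nat.
have := @finite_preimage _ _ (f @` setT) f _ fin.
have -> : f @^-1` (f @` setT) = setT.
  by apply/seteqP; split => // m _; exists m.
apply; move=> a b _ _; exact: injf.
Qed.
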